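(* Let $a,b\in\mathcal{A}$ be distinct with $p_a>0$ and $p_b>0$, and let $S$ be a scoring function. Assume there exist constants $\Delta>0$ and $\alpha>0$ such that for all $n$ large enough $$P\left(E[\tilde{L}_n(S)-L_n(S)\mid X,Y]\geq\Delta\right)\geq 1-n^{-\alpha\ln(n)}.$$ Then $\mathrm{VAR}[L_n(S)]=\Theta(n)$, i.e. there are constants $0<c\le C$ with $cn\le \mathrm{VAR}[L_n(S)]\le Cn$ for all $n$ large enough.
   Context: Let $\mathcal{A}$ be a finite alphabet and $\mathcal{A}^*=\mathcal{A}\cup\{G\}$, where $G$ is a gap symbol. A scoring function is a symmetric map $S:\mathcal{A}^*\times\mathcal{A}^*\to\mathbb{R}$. For strings $x=x_1\dots x_m$, $y=y_1\dots y_{m'}$ over $\mathcal{A}$, an alignment $\pi$ is a sequence $((\mu_1,\nu_1),\dots,(\mu_k,\nu_k))$, $k\ge0$, with $1\le\mu_1<\dots<\mu_k\le m$ and $1\le\nu_1<\dots<\nu_k\le m'$; its score is $S_\pi(x,y)=\sum_{i=1}^k S(x_{\mu_i},y_{\nu_i})+\sum_{j\notin\{\mu_i\}}S(x_j,G)+\sum_{j\notin\{\nu_i\}}S(G,y_j)$, and $L_S(x,y)=\max_\pi S_\pi(x,y)$. Let $X=X_1\dots X_n$, $Y=Y_1\dots Y_n$ where all $2n$ letters are i.i.d. with $P(X_i=c)=P(Y_j=c)=p_c$. Put $L_n(S)=L_S(X,Y)$. For fixed distinct $a,b$, let $N_a$ be the total number of occurrences of $a$ in $X$ and $Y$ combined;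 if $N_a\ge1$, choose one of these occurrences uniformly at random and replace it by $b$, giving $(\tilde X,\tilde Y)$ (if $N_a=0$ set $(\tilde X,\tilde Y)=(X,Y)$), and let $\tilde L_n(S)=L_S(\tilde X,\tilde Y)$. *)

(* Defs.v *)
From Stdlib Require Import Reals Lra Lia Arith List.
Import ListNotations.
Open Scope R_scope.

(* Conventions.
   - The finite alphabet A is {0, ..., K-1} (letters are nat < K).
   - A* = A ∪ {G}: a letter of A* is an [option nat], [None] being the gap G.
   - Strings are [list nat]; positions are 1-based as in the paper. *)

Definition sumR (l : list R) : R := fold_right Rplus 0 l.

Fixpoint words (K n : nat) : list (list nat) :=
  match n with
  | O => [[]]
  | S n' => flat_map (fun c => map (cons c) (words K n')) (seq 0 K)
  end.

Definition weight (p : nat -> R) (w : list nat) : R :=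
  fold_right (fun c r => p c * r) 1 w.

Fixpoint sublists (l : list nat) : list (list nat) :=
  match l with
  | [] => [[]]
  | x :: t => map (cons x) (sublists t) ++ sublists t
  end.

(* All alignments between strings of lengths m and m': sequences
   ((mu_1,nu_1),...,(mu_k,nu_k)) with 1 <= mu_1 < ... < mu_k <= m and
   1 <= nu_1 < ... < nu_k <= m'. *)
Definition alignments (m m' : nat) : list (list (nat * nat)) :=
  flat_map (fun mu =>
     map (fun nu => combine mu nu)
         (filter (fun nu => Nat.eqb (length nu) (length mu)) (sublists (seq 1 m'))))
    (sublists (seq 1 m)).

Definition memb (j : nat) (l : list nat) : bool := existsb (Nat.eqb j) l.

Definition letter (x : list nat) (j : nat) : nat := nth (j - 1) x 0%nat.

Definition align_score (S : option nat -> option nat -> R)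
    (x y : list nat) (pi : list (nat * nat)) : R :=
  sumR (map (fun ij => S (Some (letter x (fst ij))) (Some (letter y (snd ij)))) pi)
  + sumR (map (fun j => if memb j (map fst pi) then 0 else S (Some (letter x j)) None)
              (seq 1 (length x)))
  + sumR (map (fun j => if memb j (map snd pi) then 0 else S None (Some (letter y j)))
              (seq 1 (length y))).

(* L_S(x,y) = max over all alignments (the empty alignment is always one). *)
Definition LS (S : option nat -> option nat -> R) (x y : list nat) : R :=
  fold_right (fun pi r => Rmax (align_score S x y pi) r)
             (align_score S x y [])
             (alignments (length x) (length y)).

Fixpoint replace_occ (a b k : nat) (w : list nat) : list nat :=
  match w with
  | [] => []
  | c :: t =>
      if Nat.eqb c a then
        match k with
        | O => b :: t
        | S k' => c :: replace_occ a b k' t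
        end
      else c :: replace_occ a b k t
  end.

Definition count_a (a : nat) (x y : list nat) : nat :=
  length (filter (Nat.eqb a) (x ++ y)).

(* E[ tilde L_n(S) - L_n(S) | X = x, Y = y ]: the replaced occurrence is
   uniform among the N_a occurrences of a in x y (difference 0 if N_a = 0). *)
Definition cond_gain (S : option nat -> option nat -> R) (a b : nat)
    (x y : list nat) : R :=
  let N := count_a a x y in
  match N with
  | O => 0
  | _ =>
    sumR (map (fun k =>
            let w := replace_occ a b k (x ++ y) in
            LS S (firstn (length x) w) (skipn (length x) w) - LS S x y)
          (seq 0 N)) / INR N
  end.

Definition Exp (K : nat) (p : nat -> R) (n : nat) (f : list nat -> list nat -> R) : R :=
  sumR (flat_map (fun x => map (fun y => weight p x * weight p y * f x y)
                               (words K n)) (words K n)).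


Definition prob_gain_ge (K : nat) (p : nat -> R) (S : option nat -> option nat -> R)
    (a b n : nat) (Delta : R) : R :=
  Exp K p n (fun x y => if Rle_dec Delta (cond_gain S a b x y) then 1 else 0).

Definition var_L (K : nat) (p : nat -> R) (S : option nat -> option nat -> R) (n : nat) : R :=
  let m := Exp K p n (fun x y => LS S x y) in
  Exp K p n (fun x y => (LS S x y - m) ^ 2).

Definition valid_letter (K : nat) (u : option nat) : Prop :=
  match u with None => True | Some c => (c < K)%nat end.

(* Main.v *)
Require Import Defs.
From Stdlib Require Import Reals Lra Lia List Arith ZArith.
Import ListNotations.
Open Scope R_scope.

Lemma sumR_app l1 l2 : sumR (l1 ++ l2) = sumR l1 + sumR l2.
Proof. induction l1; simpl; [lra|]. rewrite IHl1; lra. Qed.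

Lemma sumR_flat_map {A B} (g : A -> list B) (h : B -> R) l :
  sumR (map h (flat_map g l)) = sumR (map (fun z => sumR (map h (g z))) l).
Proof. induction l; simpl; auto. rewrite map_app, sumR_app, IHl; auto. Qed.

Lemma sumR_scal {A} (h : A -> R) c l :
  sumR (map (fun z => c * h z) l) = c * sumR (map h l).
Proof. induction l; simpl; [lra|]. rewrite IHl; lra. Qed.

Lemma sumR_plus {A} (f g : A -> R) l :
  sumR (map (fun z => f z + g z) l) = sumR (map f l) + sumR (map g l).
Proof. induction l; simpl; [lra|]. rewrite IHl; lra. Qed.

Lemma sumR_minus {A} (f g : A -> R) l :
  sumR (map (fun z => f z - g z) l) = sumR (map f l) - sumR (map g l).
Proof. induction l; simpl; [lra|]. rewrite IHl; lra. Qed.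

Lemma sumR_const {A} c (l : list A) :
  sumR (map (fun _ => c) l) = INR (length l) * c.
Proof. induction l; simpl length; [simpl; lra|]. rewrite S_INR. simpl. rewrite IHl; lra. Qed.

Lemma sumR_ext {A} (f g : A -> R) l :
  (forall z, In z l -> f z = g z) -> sumR (map f l) = sumR (map g l).
Proof. intros H; f_equal; apply map_ext_in; auto. Qed.

Lemma sumR_mono {A} (f g : A -> R) l :
  (forall z, In z l -> f z <= g z) -> sumR (map f l) <= sumR (map g l).
Proof. induction l; simpl; intros H; [lra|].
  pose proof (H a (or_introl eq_refl)). pose proof (IHl (fun z h => H z (or_intror h))). lra. Qed.

Lemma sumR_nonneg {A} (f : A -> R) l :
  (forall z, In z l -> 0 <= f z) -> 0 <= sumR (map f l).
Proof. induction l; simpl; intros H; [lra|].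
  pose proof (H a (or_introl eq_refl)). pose proof (IHl (fun z h => H z (or_intror h))). lra. Qed.

Lemma sumR_ge_elem {A} (f : A -> R) l z :
  (forall z, In z l -> 0 <= f z) -> In z l -> f z <= sumR (map f l).
Proof. induction l; simpl; intros H Hz; [contradiction|].
  assert (0 <= sumR (map f l)) by (apply sumR_nonneg; auto).
  destruct Hz as [<-|Hz]. lra.
  pose proof (H a (or_introl eq_refl)). pose proof (IHl (fun z h => H z (or_intror h)) Hz). lra. Qed.

Lemma sumR_indic l a (v : nat -> R) :
  NoDup l -> In a l -> sumR (map (fun c => if Nat.eqb c a then v c else 0) l) = v a.
Proof. induction l as [|x l IH]; simpl; intros Hn Hin; [contradiction|].
  inversion Hn; subst.
  destruct (Nat.eqb_spec x a).
  - subst. rewrite (sumR_ext _ (fun _ => 0)). rewrite sumR_const. lra.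
    intros z Hz. destruct (Nat.eqb_spec z a); auto. subst; contradiction.
  - destruct Hin as [->|Hin]; [congruence|]. rewrite IH; auto; lra. Qed.

Definition WS {A} (l : list A) (w : A -> R) (f : A -> R) : R :=
  sumR (map (fun z => w z * f z) l).

Lemma WS_plus {A} l w (f g : A -> R) : WS l w (fun z => f z + g z) = WS l w f + WS l w g.
Proof. unfold WS. rewrite <- sumR_plus. apply sumR_ext; intros; lra. Qed.
Lemma WS_minus {A} l w (f g : A -> R) : WS l w (fun z => f z - g z) = WS l w f - WS l w g.
Proof. unfold WS. rewrite <- sumR_minus. apply sumR_ext; intros; lra. Qed.
Lemma WS_scal {A} l w (f : A -> R) c : WS l w (fun z => c * f z) = c * WS l w f.
Proof. unfold WS. rewrite <- sumR_scal. apply sumR_ext; intros; lra. Qed.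
Lemma WS_ext {A} l w (f g : A -> R) : (forall z, In z l -> f z = g z) -> WS l w f = WS l w g.
Proof. intros H. unfold WS. apply sumR_ext; intros z Hz; rewrite H; auto. Qed.
Lemma WS_mono {A} l w (f g : A -> R) : (forall z, In z l -> 0 <= w z) ->
  (forall z, In z l -> f z <= g z) -> WS l w f <= WS l w g.
Proof. intros H1 H2. unfold WS. apply sumR_mono; intros z Hz.
  apply Rmult_le_compat_l; auto. Qed.
Lemma WS_const {A} l w (c : R) : WS l w (fun _ : A => c) = c * WS l w (fun _ => 1).
Proof. rewrite <- WS_scal. apply WS_ext; intros; lra. Qed.

Lemma WS_var {A} l w (f : A -> R) t : WS l w (fun _ => 1) = 1 ->
  WS l w (fun z => (f z - t)^2) = WS l w (fun z => (f z - WS l w f)^2) + (WS l w f - t)^2.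
Proof. intros H1. set (M := WS l w f).
  rewrite (WS_ext l w _ (fun z => (f z - M)^2 + ((2*(M-t)) * f z + (-2*(M-t)*M + (M-t)^2)))).
  2:{ intros; ring. }
  rewrite WS_plus, WS_plus, WS_scal, WS_const, H1. fold M. ring. Qed.
Definition Ew (K : nat) (p : nat -> R) (n : nat) (f : list nat -> R) : R :=
  WS (words K n) (weight p) f.

Definition validw (K : nat) (w : list nat) : Prop := Forall (fun c => (c < K)%nat) w.

Lemma words_in K n w : In w (words K n) -> length w = n /\ validw K w.
Proof. revert w; induction n; simpl; intros w H.
  - destruct H as [<-|[]]. split; auto. constructor.
  - apply in_flat_map in H. destruct H as [c [Hc H]]. apply in_map_iff in H.
    destruct H as [w' [<- Hw']]. apply IHn in Hw'. destruct Hw'. apply in_seq in Hc.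
    split; simpl; auto. constructor; auto. lia. Qed.

Lemma weight_nonneg K p w : (forall c, (c < K)%nat -> 0 <= p c) -> validw K w -> 0 <= weight p w.
Proof. intros Hp H; induction H; simpl; [lra|]. apply Rmult_le_pos; auto. Qed.

Lemma Ew_0 K p f : Ew K p 0 f = f [].
Proof. unfold Ew, WS; simpl; lra. Qed.

Lemma Ew_S K p n f : Ew K p (S n) f = WS (seq 0 K) p (fun c => Ew K p n (fun w => f (c :: w))).
Proof. unfold Ew, WS. simpl words. rewrite sumR_flat_map. apply sumR_ext; intros c _.
  rewrite map_map. rewrite <- sumR_scal. apply sumR_ext; intros; simpl; lra. Qed.

Lemma Ew_plus K p n f g : Ew K p n (fun z => f z + g z) = Ew K p n f + Ew K p n g.
Proof. apply WS_plus. Qed.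
Lemma Ew_minus K p n f g : Ew K p n (fun z => f z - g z) = Ew K p n f - Ew K p n g.
Proof. apply WS_minus. Qed.
Lemma Ew_scal K p n f c : Ew K p n (fun z => c * f z) = c * Ew K p n f.
Proof. apply WS_scal. Qed.
Lemma Ew_ext K p n f g : (forall w, validw K w -> f w = g w) -> Ew K p n f = Ew K p n g.
Proof. intros H; apply WS_ext; intros z Hz; apply H; apply (words_in K n z Hz). Qed.
Lemma Ew_ext_len K p n f g : (forall w, validw K w -> length w = n -> f w = g w) -> Ew K p n f = Ew K p n g.
Proof. intros H; apply WS_ext; intros z Hz; destruct (words_in K n z Hz); apply H; auto. Qed.
Lemma Ew_mono K p n f g : (forall c, (c < K)%nat -> 0 <= p c) ->
  (forall w, validw K w -> f w <= g w) -> Ew K p n f <= Ew K p n g.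
Proof. intros Hp H; apply WS_mono; intros z Hz; destruct (words_in K n z Hz).
  apply (weight_nonneg K); auto. apply H; auto. Qed.
Lemma Ew_mono_len K p n f g : (forall c, (c < K)%nat -> 0 <= p c) ->
  (forall w, validw K w -> length w = n -> f w <= g w) -> Ew K p n f <= Ew K p n g.
Proof. intros Hp H; apply WS_mono; intros z Hz; destruct (words_in K n z Hz).
  apply (weight_nonneg K); auto. apply H; auto. Qed.

Lemma WS_seq_one K p : sumR (map p (seq 0 K)) = 1 -> WS (seq 0 K) p (fun _ => 1) = 1.
Proof. intros H; transitivity (sumR (map p (seq 0 K))); auto. unfold WS. apply sumR_ext; intros; lra. Qed.

Lemma Ew_one K p n : sumR (map p (seq 0 K)) = 1 -> Ew K p n (fun _ => 1) = 1.
Proof. intros H; induction n. rewrite Ew_0; auto.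
  rewrite Ew_S. rewrite (WS_ext _ _ _ (fun _ => 1)). apply WS_seq_one; auto.
  intros; apply IHn. Qed.

Lemma Ew_const K p n c : sumR (map p (seq 0 K)) = 1 -> Ew K p n (fun _ => c) = c.
Proof. intros H. unfold Ew. rewrite WS_const. fold (Ew K p n (fun _ => 1)). rewrite Ew_one; auto; lra. Qed.

Lemma Ew_app K p n m G : Ew K p (n + m) G = Ew K p n (fun x => Ew K p m (fun y => G (x ++ y))).
Proof. revert G; induction n; intros G.
  - simpl. rewrite (Ew_0 K p). reflexivity.
  - simpl (S n + m)%nat. rewrite !Ew_S. apply WS_ext; intros c _. rewrite IHn. reflexivity. Qed.

Lemma sumR_flat_map' {A} (g : A -> list R) l :
  sumR (flat_map g l) = sumR (map (fun z => sumR (g z)) l).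
Proof. induction l; simpl; auto. rewrite sumR_app, IHl; auto. Qed.

Lemma Exp_Ew K p n f : Exp K p n f = Ew K p (n + n) (fun w => f (firstn n w) (skipn n w)).
Proof.
  rewrite Ew_app. unfold Exp. rewrite sumR_flat_map'.
  transitivity (Ew K p n (fun x => Ew K p n (fun y => f x y))).
  { unfold Ew, WS. apply sumR_ext; intros x _. rewrite <- sumR_scal.
    apply sumR_ext; intros; lra. }
  apply Ew_ext_len; intros x _ Hx. apply Ew_ext; intros y _.
  rewrite firstn_app, skipn_app, <- Hx, Nat.sub_diag, firstn_all, skipn_all. simpl.
  rewrite app_nil_r. reflexivity. Qed.
Definition BD (K : nat) (F : list nat -> R) (d : R) : Prop :=
  forall w1 w2 c c', validw K w1 -> validw K w2 -> (c < K)%nat -> (c' < K)%nat ->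
    Rabs (F (w1 ++ c :: w2) - F (w1 ++ c' :: w2)) <= d.

Lemma Rabs_le_iff x d : Rabs x <= d <-> -d <= x <= d.
Proof. split; intros; [|apply Rabs_le; auto]. split_Rabs; lra. Qed.

Lemma var_bd K p (Hp : forall c, (c < K)%nat -> 0 <= p c) (Hs : sumR (map p (seq 0 K)) = 1)
  (HK : (0 < K)%nat) : forall n F d, BD K F d ->
  Ew K p n (fun w => (F w - Ew K p n F)^2) <= INR n * d^2.
Proof.
  induction n; intros F d HB.
  - rewrite !Ew_0. simpl. replace (F [] - F [])%R with 0%R by ring. lra.
  - set (g := fun c => Ew K p n (fun w => F (c :: w))).
    assert (HM : Ew K p (S n) F = WS (seq 0 K) p g) by (rewrite Ew_S; reflexivity).
    rewrite HM. rewrite Ew_S.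
    set (M := WS (seq 0 K) p g).
    assert (Hone : WS (seq 0 K) p (fun _ => 1) = 1) by (apply WS_seq_one; auto).
    rewrite (WS_ext _ _ _ (fun c => Ew K p n (fun w => (F (c :: w) - g c)^2) + (g c - M)^2)).
    2:{ intros c _. unfold Ew. rewrite WS_var. fold (Ew K p n (fun w => F (c :: w))). fold (g c). reflexivity.
        apply Ew_one; auto. }
    rewrite WS_plus.
    assert (H1 : WS (seq 0 K) p (fun c => Ew K p n (fun w => (F (c :: w) - g c)^2)) <= INR n * d^2).
    { rewrite <- (Rmult_1_r (INR n * d^2)), <- Hone, <- WS_scal.
      apply WS_mono. intros c Hc; apply in_seq in Hc; apply Hp; lia.
      intros c Hc; apply in_seq in Hc. rewrite Rmult_1_r. apply IHn.
      intros w1 w2 c1 c2 H1 H2 H3 H4. apply (HB (c :: w1)); auto. constructor; auto; lia. }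
    assert (Hg : forall c, (c < K)%nat -> (g c - g 0%nat)^2 <= d^2).
    { intros c Hc. assert (Hd : Rabs (g c - g 0%nat) <= d).
      { unfold g. rewrite <- Ew_minus. apply Rabs_le_iff. rewrite <- (Ew_const K p n d Hs) at 2.
        rewrite <- (Ew_const K p n (-d) Hs). split; apply Ew_mono; auto; intros w Hw;
        pose proof (HB [] w c 0%nat (Forall_nil _) Hw Hc HK) as X; apply Rabs_le_iff in X; simpl in X; lra. }
      apply Rabs_le_iff in Hd. nra. }
    assert (H2 : WS (seq 0 K) p (fun c => (g c - M)^2) <= d^2).
    { pose proof (WS_var (seq 0 K) p g (g 0%nat) Hone) as V. fold M in V.
      assert (WS (seq 0 K) p (fun c => (g c - g 0%nat)^2) <= d^2).
      { rewrite <- (Rmult_1_r (d^2)), <- Hone, <- WS_scal.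
        apply WS_mono. intros c Hc; apply in_seq in Hc; apply Hp; lia.
        intros c Hc; apply in_seq in Hc. rewrite Rmult_1_r. apply Hg. lia. }
      assert (0 <= (M - g 0%nat)^2) by apply pow2_ge_0. lra. }
    rewrite S_INR. lra.
Qed.
Definition cnt (a : nat) (w : list nat) : nat := length (filter (Nat.eqb a) w).

Lemma cnt_cons a c w : cnt a (c :: w) = if Nat.eqb a c then S (cnt a w) else cnt a w.
Proof. unfold cnt; simpl. destruct (Nat.eqb a c); reflexivity. Qed.

Lemma WS_indic K p a X : (a < K)%nat ->
  WS (seq 0 K) p (fun c => if Nat.eqb c a then X else 0) = p a * X.
Proof. intros Ha. unfold WS.
  rewrite (sumR_ext _ (fun c => if Nat.eqb c a then p c * X else 0)).
  apply (sumR_indic _ _ (fun c => p c * X)). apply seq_NoDup. apply in_seq; lia.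
  intros c _; destruct (Nat.eqb c a); lra. Qed.

Lemma repl_sum a b c w (F : list nat -> R) :
  sumR (map (fun k => F (replace_occ a b k (c :: w))) (seq 0 (cnt a (c :: w)))) =
  (if Nat.eqb c a then F (b :: w) else 0) +
  sumR (map (fun k => F (c :: replace_occ a b k w)) (seq 0 (cnt a w))).
Proof.
  rewrite cnt_cons. destruct (Nat.eqb_spec c a).
  - subst. rewrite Nat.eqb_refl. simpl seq. rewrite <- seq_shift. simpl. rewrite Nat.eqb_refl. f_equal. f_equal. rewrite List.map_map. reflexivity.
  - destruct (Nat.eqb_spec a c); [congruence|].
    simpl replace_occ. assert (Nat.eqb c a = false) as E by (apply Nat.eqb_neq; auto).
    rewrite E. lra.
Qed.

Lemma repl_id K p a b (Hs : sumR (map p (seq 0 K)) = 1)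
  (Ha : (a < K)%nat) (Hb : (b < K)%nat) (Hpb : 0 < p b) :
  forall m F, Ew K p m (fun w => sumR (map (fun k => F (replace_occ a b k w)) (seq 0 (cnt a w))))
    = (p a / p b) * Ew K p m (fun w => INR (cnt b w) * F w).
Proof.
  induction m; intros F.
  - rewrite !Ew_0. unfold cnt; simpl. lra.
  - rewrite !Ew_S.
    rewrite (WS_ext _ _ _ (fun c => (if Nat.eqb c a then Ew K p m (fun w => F (b :: w)) else 0)
        + (p a / p b) * Ew K p m (fun w => INR (cnt b w) * F (c :: w)))).
    2:{ intros c _. rewrite (Ew_ext _ _ _ _ (fun w => (if Nat.eqb c a then F (b :: w) else 0) +
          sumR (map (fun k => F (c :: replace_occ a b k w)) (seq 0 (cnt a w))))).
        2:{ intros; apply repl_sum. }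
        rewrite Ew_plus. rewrite (IHm (fun w => F (c :: w))). f_equal.
        destruct (Nat.eqb c a); auto. rewrite Ew_const; auto. }
    rewrite (WS_ext _ _ (fun c => Ew K p m (fun w => INR (cnt b (c :: w)) * F (c :: w)))
        (fun c => (if Nat.eqb c b then Ew K p m (fun w => F (b :: w)) else 0)
        + Ew K p m (fun w => INR (cnt b w) * F (c :: w)))).
    2:{ intros c _. rewrite <- (Ew_const K p m 0 Hs) at 1.
        destruct (Nat.eqb_spec c b).
        - subst. rewrite <- Ew_plus. apply Ew_ext; intros w _. rewrite cnt_cons, Nat.eqb_refl, S_INR. ring.
        - rewrite <- Ew_plus. apply Ew_ext; intros w _. rewrite cnt_cons.
          destruct (Nat.eqb_spec b c); [congruence|]. ring. }
    rewrite !WS_plus, !WS_indic, !WS_scal; auto. field. lra.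
Qed.

Lemma Ew_cnt K p a (Hs : sumR (map p (seq 0 K)) = 1) (Ha : (a < K)%nat) :
  forall m, Ew K p m (fun w => INR (cnt a w)) = INR m * p a.
Proof. induction m.
  - rewrite Ew_0. unfold cnt; simpl; lra.
  - rewrite Ew_S. rewrite (WS_ext _ _ _ (fun c => (if Nat.eqb c a then 1 else 0) + INR m * p a)).
    + rewrite WS_plus, WS_indic, WS_const, WS_seq_one; auto. rewrite S_INR; lra.
    + intros c _. rewrite <- IHm. rewrite <- (Ew_const K p m 1 Hs) at 1.
      rewrite <- (Ew_const K p m 0 Hs) at 1. destruct (Nat.eqb_spec c a).
      * subst. rewrite <- Ew_plus. apply Ew_ext; intros w _. rewrite cnt_cons, Nat.eqb_refl, S_INR. ring.
      * rewrite <- Ew_plus. apply Ew_ext; intros w _. rewrite cnt_cons.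
        destruct (Nat.eqb_spec a c); [congruence|]. ring.
Qed.
Definition Lv (K : nat) : list (option nat) := None :: map Some (seq 0 K).
Definition Smax (K : nat) (S : option nat -> option nat -> R) : R :=
  sumR (map (fun u => sumR (map (fun v => Rabs (S u v)) (Lv K))) (Lv K)).

Lemma Lv_in K u : valid_letter K u -> In u (Lv K).
Proof. destruct u as [c|]; simpl; intros H; [right|left; auto].
  apply in_map. apply in_seq; lia. Qed.

Lemma S_bound K S u v : valid_letter K u -> valid_letter K v -> Rabs (S u v) <= Smax K S.
Proof. intros Hu Hv. unfold Smax.
  eapply Rle_trans; [|apply (sumR_ge_elem (fun u => sumR (map (fun v => Rabs (S u v)) (Lv K))) _ u)].
  - apply (sumR_ge_elem (fun v => Rabs (S u v))). intros; apply Rabs_pos. apply Lv_in; auto.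
  - intros; apply sumR_nonneg; intros; apply Rabs_pos.
  - apply Lv_in; auto. Qed.

Lemma Smax_nonneg K S : 0 <= Smax K S.
Proof. unfold Smax. apply sumR_nonneg; intros; apply sumR_nonneg; intros; apply Rabs_pos. Qed.

Lemma letter_valid K x i : (0 < K)%nat -> validw K x -> (letter x i < K)%nat.
Proof. intros HK Hx. unfold validw in Hx. unfold letter. destruct (Nat.lt_ge_cases (i-1) (length x)).
  - rewrite Forall_forall in Hx. apply Hx. apply nth_In; auto.
  - rewrite nth_overflow; auto. Qed.

Lemma nth_change (u1 u2 : list nat) c c' k d : k <> length u1 ->
  nth k (u1 ++ c :: u2) d = nth k (u1 ++ c' :: u2) d.
Proof. intros H. destruct (Nat.lt_ge_cases k (length u1)).
  - rewrite !app_nth1; auto.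
  - rewrite !app_nth2; auto. destruct (k - length u1)%nat eqn:E; [lia|]. reflexivity. Qed.

Lemma letter_change u1 u2 c c' i : (i - 1 <> length u1)%nat ->
  letter (u1 ++ c :: u2) i = letter (u1 ++ c' :: u2) i.
Proof. intros; unfold letter; apply nth_change; auto. Qed.

Lemma length_change (u1 u2 : list nat) c c' : length (u1 ++ c :: u2) = length (u1 ++ c' :: u2).
Proof. rewrite !length_app; reflexivity. Qed.

Lemma sum_change {A} (g : A -> nat) (l : list A) P (h h' : A -> R) d : 0 <= d ->
  NoDup (map g l) -> (forall z, g z <> P -> h z = h' z) ->
  (forall z, In z l -> Rabs (h z - h' z) <= d) ->
  Rabs (sumR (map h l) - sumR (map h' l)) <= d.
Proof. intros Hd. induction l as [|z l IH]; simpl; intros Hn He Hb.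
  - replace (0 - 0) with 0 by ring. rewrite Rabs_R0; auto.
  - inversion Hn; subst. destruct (Nat.eq_dec (g z) P).
    + assert (sumR (map h l) = sumR (map h' l)).
      { apply sumR_ext. intros z' Hz'. apply He. intros E. apply H1. rewrite e, <- E. apply in_map; auto. }
      rewrite H. replace (h z + sumR (map h' l) - (h' z + sumR (map h' l))) with (h z - h' z) by ring.
      apply Hb; left; auto.
    + rewrite He; auto. replace (h' z + sumR (map h l) - (h' z + sumR (map h' l))) with
        (sumR (map h l) - sumR (map h' l)) by ring. apply IH; auto. Qed.

Lemma NoDup_map_in {A B} (f : A -> B) l : NoDup l ->
  (forall x y, In x l -> In y l -> f x = f y -> x = y) -> NoDup (map f l).
Proof. induction l; simpl; intros Hn Hi; constructor.
  - inversion Hn; subst. intros Hin. apply in_map_iff in Hin. destruct Hin as [y [E Hy]].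
    assert (y = a) by (apply Hi; auto). subst; contradiction.
  - inversion Hn; subst. apply IHl; auto. Qed.

Lemma sublists_prop l s : In s (sublists l) -> incl s l /\ (NoDup l -> NoDup s).
Proof. revert s; induction l; simpl; intros s H.
  - destruct H as [<-|[]]. split; [intros x []|constructor].
  - apply in_app_or in H. destruct H as [H|H].
    + apply in_map_iff in H. destruct H as [s' [<- Hs']]. destruct (IHl s' Hs') as [I N].
      split. intros x [<-|Hx]; [left; auto|right; apply I; auto].
      intros Hn; inversion Hn; subst. constructor; auto.
    + destruct (IHl s H) as [I N]. split. intros x Hx; right; apply I; auto.
      intros Hn; inversion Hn; subst; auto. Qed.

Lemma combine_fst_snd (mu nu : list nat) : length mu = length nu ->
  map fst (combine mu nu) = mu /\ map snd (combine mu nu) = nu.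
Proof. revert nu; induction mu; destruct nu; simpl; intros H; try discriminate; auto.
  destruct (IHmu nu) as [A B]; try lia. rewrite A, B; auto. Qed.

Lemma pred_nodup (l : list nat) m : incl l (seq 1 m) -> NoDup l -> NoDup (map (fun j => j - 1)%nat l).
Proof. intros I N. apply NoDup_map_in; auto. intros x y Hx Hy E.
  apply I, in_seq in Hx. apply I, in_seq in Hy. lia. Qed.

Lemma align_prop m m' pi : In pi (alignments m m') ->
  NoDup (map (fun ij => fst ij - 1)%nat pi) /\ NoDup (map (fun ij => snd ij - 1)%nat pi).
Proof. unfold alignments. intros H. apply in_flat_map in H. destruct H as [mu [Hmu H]].
  apply in_map_iff in H. destruct H as [nu [<- Hnu]]. apply filter_In in Hnu. destruct Hnu as [Hnu E].
  apply Nat.eqb_eq in E. destruct (combine_fst_snd mu nu) as [F1 F2]; [lia|].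
  destruct (sublists_prop _ _ Hmu) as [I1 N1]. destruct (sublists_prop _ _ Hnu) as [I2 N2].
  split.
  - rewrite <- (map_map fst (fun j => j - 1)%nat). rewrite F1. eapply pred_nodup; eauto. apply N1, seq_NoDup.
  - rewrite <- (map_map snd (fun j => j - 1)%nat). rewrite F2. eapply pred_nodup; eauto. apply N2, seq_NoDup.
Qed.

Lemma seq_nodup_pred n : NoDup (map (fun j => j - 1)%nat (seq 1 n)).
Proof. eapply pred_nodup. apply incl_refl. apply seq_NoDup. Qed.

Lemma Rmax_bd a a' b b' d : Rabs (a - a') <= d -> Rabs (b - b') <= d -> Rabs (Rmax a b - Rmax a' b') <= d.
Proof. intros H1 H2. apply Rabs_le_iff in H1. apply Rabs_le_iff in H2. apply Rabs_le_iff.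
  unfold Rmax. destruct (Rle_dec a b); destruct (Rle_dec a' b'); lra. Qed.

Lemma fold_max_bd {X} (l : list X) f g bf bg d : Rabs (bf - bg) <= d ->
  (forall z, In z l -> Rabs (f z - g z) <= d) ->
  Rabs (fold_right (fun z r => Rmax (f z) r) bf l - fold_right (fun z r => Rmax (g z) r) bg l) <= d.
Proof. induction l; simpl; intros H1 H2; auto. apply Rmax_bd; auto. Qed.

Lemma Sdiff K S u u' v : valid_letter K u -> valid_letter K u' -> valid_letter K v ->
  Rabs (S u v - S u' v) <= 2 * Smax K S.
Proof. intros. assert (Rabs (S u v) <= Smax K S) by (apply S_bound; auto). assert (Rabs (S u' v) <= Smax K S) by (apply S_bound; auto).
  eapply Rle_trans. apply Rabs_triang. rewrite Rabs_Ropp. lra. Qed.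
Lemma Sdiff2 K S u v v' : valid_letter K u -> valid_letter K v -> valid_letter K v' ->
  Rabs (S u v - S u v') <= 2 * Smax K S.
Proof. intros. assert (Rabs (S u v) <= Smax K S) by (apply S_bound; auto). assert (Rabs (S u v') <= Smax K S) by (apply S_bound; auto).
  eapply Rle_trans. apply Rabs_triang. rewrite Rabs_Ropp. lra. Qed.
Lemma align_bd_x K S u1 u2 c c' y pi : (0 < K)%nat -> validw K u1 -> validw K u2 -> validw K y ->
  (c < K)%nat -> (c' < K)%nat -> NoDup (map (fun ij => fst ij - 1)%nat pi) ->
  Rabs (align_score S (u1 ++ c :: u2) y pi - align_score S (u1 ++ c' :: u2) y pi) <= 4 * Smax K S.
Proof.
  intros HK H1 H2 Hy Hc Hc' Hn.
  assert (V : validw K (u1 ++ c :: u2)) by (apply Forall_app; split; auto).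
  assert (V' : validw K (u1 ++ c' :: u2)) by (apply Forall_app; split; auto).
  pose proof (Smax_nonneg K S) as Hs0.
  unfold align_score. rewrite (length_change u1 u2 c' c).
  set (By := sumR (map (fun j => if memb j (map snd pi) then 0 else S None (Some (letter y j))) (seq 1 (length y)))).
  match goal with |- Rabs (?A + ?B + _ - (?A' + ?B' + _)) <= _ =>
    assert (HA : Rabs (A - A') <= 2 * Smax K S); [|assert (HB : Rabs (B - B') <= 2 * Smax K S)] end.
  - apply (sum_change (fun ij => fst ij - 1)%nat _ (length u1)); auto. lra.
    + intros z Hz. rewrite (letter_change u1 u2 c c'); auto.
    + intros z _. apply Sdiff; simpl; apply letter_valid; auto.
  - apply (sum_change (fun j => j - 1)%nat _ (length u1)). lra. apply seq_nodup_pred.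
    + intros z Hz. rewrite (letter_change u1 u2 c c'); auto.
    + intros z _. destruct (memb z (map fst pi)). replace (0 - 0) with 0 by ring. rewrite Rabs_R0; lra.
      apply Sdiff; simpl; auto; apply letter_valid; auto.
  - match goal with |- Rabs (?A + ?B + ?C - (?A' + ?B' + ?C)) <= _ =>
      replace (A + B + C - (A' + B' + C)) with ((A - A') + (B - B')) by ring end.
    eapply Rle_trans. apply Rabs_triang. lra.
Qed.

Lemma align_bd_y K S x u1 u2 c c' pi : (0 < K)%nat -> validw K u1 -> validw K u2 -> validw K x ->
  (c < K)%nat -> (c' < K)%nat -> NoDup (map (fun ij => snd ij - 1)%nat pi) ->
  Rabs (align_score S x (u1 ++ c :: u2) pi - align_score S x (u1 ++ c' :: u2) pi) <= 4 * Smax K S.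
Proof.
  intros HK H1 H2 Hx Hc Hc' Hn.
  assert (V : validw K (u1 ++ c :: u2)) by (apply Forall_app; split; auto).
  assert (V' : validw K (u1 ++ c' :: u2)) by (apply Forall_app; split; auto).
  pose proof (Smax_nonneg K S) as Hs0.
  unfold align_score. rewrite (length_change u1 u2 c' c).
  match goal with |- Rabs (?A + ?B + ?C - (?A' + ?B + ?C')) <= _ =>
    assert (HA : Rabs (A - A') <= 2 * Smax K S); [|assert (HB : Rabs (C - C') <= 2 * Smax K S)] end.
  - apply (sum_change (fun ij => snd ij - 1)%nat _ (length u1)); auto. lra.
    + intros z Hz. rewrite (letter_change u1 u2 c c'); auto.
    + intros z _. apply Sdiff2; simpl; apply letter_valid; auto.
  - apply (sum_change (fun j => j - 1)%nat _ (length u1)). lra. apply seq_nodup_pred.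
    + intros z Hz. rewrite (letter_change u1 u2 c c'); auto.
    + intros z _. destruct (memb z (map snd pi)). replace (0 - 0) with 0 by ring. rewrite Rabs_R0; lra.
      apply Sdiff2; simpl; auto; apply letter_valid; auto.
  - match goal with |- Rabs (?A + ?B + ?C - (?A' + ?B + ?C')) <= _ =>
      replace (A + B + C - (A' + B + C')) with ((A - A') + (C - C')) by ring end.
    eapply Rle_trans. apply Rabs_triang. lra.
Qed.

Lemma LS_bd_x K S u1 u2 c c' y : (0 < K)%nat -> validw K u1 -> validw K u2 -> validw K y ->
  (c < K)%nat -> (c' < K)%nat ->
  Rabs (LS S (u1 ++ c :: u2) y - LS S (u1 ++ c' :: u2) y) <= 4 * Smax K S.
Proof. intros. unfold LS. rewrite (length_change u1 u2 c' c).
  apply fold_max_bd. apply align_bd_x; auto. constructor.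
  intros z Hz. apply align_bd_x; auto. apply (align_prop _ _ _ Hz). Qed.

Lemma LS_bd_y K S x u1 u2 c c' : (0 < K)%nat -> validw K u1 -> validw K u2 -> validw K x ->
  (c < K)%nat -> (c' < K)%nat ->
  Rabs (LS S x (u1 ++ c :: u2) - LS S x (u1 ++ c' :: u2)) <= 4 * Smax K S.
Proof. intros. unfold LS. rewrite (length_change u1 u2 c' c).
  apply fold_max_bd. apply align_bd_y; auto. constructor.
  intros z Hz. apply align_bd_y; auto. apply (align_prop _ _ _ Hz). Qed.
Definition L2 (S : option nat -> option nat -> R) (n : nat) (w : list nat) : R :=
  LS S (firstn n w) (skipn n w).

Lemma validw_split K n w : validw K w -> validw K (firstn n w) /\ validw K (skipn n w).
Proof. intros H. unfold validw in *. rewrite <- (firstn_skipn n w) in H. apply Forall_app in H; auto. Qed.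

Lemma L2_bd K S n : (0 < K)%nat -> BD K (L2 S n) (4 * Smax K S).
Proof. intros HK w1 w2 c c' H1 H2 Hc Hc'. unfold L2.
  destruct (validw_split K n w1 H1) as [F1 S1].
  rewrite !firstn_app, !skipn_app. simpl length.
  destruct (n - length w1)%nat as [|k] eqn:E.
  - simpl firstn. simpl skipn. apply LS_bd_y; auto. unfold validw; rewrite app_nil_r; auto.
  - destruct (validw_split K k w2 H2) as [F2 S2].
    simpl firstn. simpl skipn. apply LS_bd_x; auto. unfold validw; apply Forall_app; auto.
Qed.

Lemma replace_split a b : forall w k, (k < cnt a w)%nat ->
  exists w1 w2, w = w1 ++ a :: w2 /\ replace_occ a b k w = w1 ++ b :: w2.
Proof. induction w as [|c w IH]; intros k Hk.
  - unfold cnt in Hk; simpl in Hk; lia.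
  - rewrite cnt_cons in Hk. simpl replace_occ. destruct (Nat.eqb_spec c a).
    + subst c. rewrite ?Nat.eqb_refl in Hk. rewrite ?Nat.eqb_refl. destruct k as [|k].
      * exists [], w; auto.
      * destruct (IH k) as [w1 [w2 [E1 E2]]]; [lia|]. exists (a :: w1), w2. rewrite E2, E1; auto.
    + destruct (Nat.eqb_spec a c); [congruence|].
      destruct (IH k Hk) as [w1 [w2 [E1 E2]]]. exists (c :: w1), w2. rewrite E2, E1; auto.
Qed.

Lemma gain_rel S a b n w : length w = (n + n)%nat ->
  INR (cnt a w) * cond_gain S a b (firstn n w) (skipn n w) =
  sumR (map (fun k => L2 S n (replace_occ a b k w) - L2 S n w) (seq 0 (cnt a w))).
Proof. intros Hl. unfold cond_gain, count_a. rewrite firstn_skipn, length_firstn, Nat.min_l by lia.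
  fold (cnt a w). unfold L2. destruct (cnt a w) as [|m].
  - simpl; lra.
  - cbv zeta. field. apply not_0_INR; lia. Qed.

Lemma cnt_le a w : (cnt a w <= length w)%nat.
Proof. apply filter_length_le. Qed.
Lemma exp_le_mono x y : x <= y -> exp x <= exp y.
Proof. intros H. destruct (Rle_lt_or_eq_dec x y H) as [h|h]. left; apply exp_increasing; auto. subst; lra. Qed.

Lemma eps_small alpha eta : 0 < alpha -> 0 < eta ->
  exists N, forall n, (N <= n)%nat -> Rpower (INR n) (- (alpha * ln (INR n))) <= eta.
Proof. intros Ha He.
  set (M := Rmax 1 (- ln eta / alpha)).
  assert (HM1 : 1 <= M) by apply Rmax_l.
  assert (HM2 : - ln eta / alpha <= M) by apply Rmax_r.
  destruct (archimed (exp M)) as [H1 _].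
  assert (Hpos : (0 < up (exp M))%Z). { apply lt_IZR. pose proof (exp_pos M). simpl. lra. }
  exists (Z.to_nat (up (exp M))). intros n Hn.
  apply le_INR in Hn. rewrite INR_IZR_INZ, Z2Nat.id in Hn by lia.
  assert (Hx : exp M < INR n) by lra.
  assert (HL : M < ln (INR n)). { rewrite <- (ln_exp M) at 1. apply ln_increasing; auto. apply exp_pos. }
  unfold Rpower. rewrite <- (exp_ln eta He). apply exp_le_mono.
  set (L := ln (INR n)) in *.
  assert (- ln eta <= alpha * M). { apply (Rmult_le_compat_l alpha) in HM2; [|lra].
    replace (alpha * (- ln eta / alpha)) with (- ln eta) in HM2 by (field; lra). lra. }
  assert (alpha * L * L >= alpha * L * 1).
  { apply Rle_ge, Rmult_le_compat_l; [apply Rmult_le_pos|]; lra. }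
  assert (alpha * L >= alpha * M) by (apply Rle_ge, Rmult_le_compat_l; lra).
  lra.
Qed.

Lemma cnt_app a w1 w2 : INR (cnt a (w1 ++ w2)) = INR (cnt a w1) + INR (cnt a w2).
Proof. unfold cnt. rewrite filter_app, length_app, plus_INR. reflexivity. Qed.

Lemma cnt_cons_R a c w : INR (cnt a (c :: w)) = (if Nat.eqb a c then 1 else 0) + INR (cnt a w).
Proof. rewrite cnt_cons. destruct (Nat.eqb a c); [rewrite S_INR|]; lra. Qed.

Lemma D_bd K a b (s : R) : 0 <= s ->
  BD K (fun w => INR (cnt a w) - s * INR (cnt b w)) (1 + s).
Proof. intros Hs w1 w2 c c' _ _ _ _. rewrite !cnt_app, !cnt_cons_R. apply Rabs_le_iff.
  destruct (Nat.eqb a c), (Nat.eqb a c'), (Nat.eqb b c), (Nat.eqb b c'); split; nra. Qed.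
Theorem mainTheorem2
  (K : nat) (p : nat -> R) (S : option nat -> option nat -> R) (a b : nat)
  (Hp_nonneg : forall c, (c < K)%nat -> 0 <= p c)
  (Hp_sum : sumR (map p (seq 0 K)) = 1)
  (HS_sym : forall u v, valid_letter K u -> valid_letter K v -> S u v = S v u)
  (Ha : (a < K)%nat) (Hb : (b < K)%nat) (Hab : a <> b)
  (Hpa : 0 < p a) (Hpb : 0 < p b)
  (Hgain : exists Delta alpha N0, 0 < Delta /\ 0 < alpha /\
     forall n : nat, (N0 <= n)%nat ->
       prob_gain_ge K p S a b n Delta
         >= 1 - Rpower (INR n) (- (alpha * ln (INR n)))) :
  exists c C N1, 0 < c /\ c <= C /\
    forall n : nat, (N1 <= n)%nat ->
      c * INR n <= var_L K p S n <= C * INR n.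
Proof.
  destruct Hgain as [Dl [alpha [N0 [HDl [Halpha Hg]]]]].
  assert (HK : (0 < K)%nat) by lia.
  set (d := 4 * Smax K S).
  assert (Hd : 0 <= d) by (unfold d; pose proof (Smax_nonneg K S); lra).
  set (q := p a). set (r := p b).
  set (s := q / r).
  assert (Hs : 0 <= s) by (unfold s; apply Rlt_le, Rdiv_lt_0_compat; auto).
  set (e := 1 + s).
  set (eta := q * Dl / (2 * (Dl + d))).
  assert (Hq : 0 < q) by exact Hpa. assert (Hr : 0 < r) by exact Hpb.
  assert (Heta : 0 < eta) by (unfold eta; apply Rdiv_lt_0_compat; [apply Rmult_lt_0_compat|]; lra).
  destruct (eps_small alpha eta Halpha Heta) as [N2 HN2].
  set (c := q^2 * Dl^2 / (2 * e^2)).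
  assert (He : 0 < e) by (unfold e; lra).
  assert (Hc : 0 < c).
  { unfold c. apply Rdiv_lt_0_compat. apply Rmult_lt_0_compat; apply pow_lt; auto.
    apply Rmult_lt_0_compat; [lra| apply pow_lt; auto]. }
  exists c, (c + 2 * d^2), (Nat.max N0 N2). split; auto. split.
  { assert (0 <= d^2) by apply pow2_ge_0. lra. }
  intros n Hn.
  set (N := (n + n)%nat).
  assert (HN : INR N = 2 * INR n) by (unfold N; rewrite plus_INR; ring).
  assert (Hvar : var_L K p S n = Ew K p N (fun w => (L2 S n w - Ew K p N (L2 S n))^2)).
  { unfold var_L, L2. rewrite !Exp_Ew. reflexivity. }
  rewrite Hvar. split.
  2:{ pose proof (var_bd K p Hp_nonneg Hp_sum HK N (L2 S n) d (L2_bd K S n HK)) as V.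
      rewrite HN in V. assert (0 <= c * INR n) by (apply Rmult_le_pos; [lra|apply pos_INR]). lra. }
  set (Na := fun w => INR (cnt a w)).
  set (Nb := fun w => INR (cnt b w)).
  set (G := fun w => cond_gain S a b (firstn n w) (skipn n w)).
  set (I := fun w => if Rle_dec Dl (G w) then 1 else 0).
  assert (HP : prob_gain_ge K p S a b n Dl = Ew K p N I).
  { unfold prob_gain_ge. rewrite Exp_Ew. reflexivity. }
  assert (HPb : 1 - Ew K p N I <= eta).
  { rewrite <- HP. pose proof (Hg n ltac:(lia)). pose proof (HN2 n ltac:(lia)). lra. }
  assert (ENa : Ew K p N Na = INR N * q) by (apply Ew_cnt; auto).
  assert (ENb : Ew K p N Nb = INR N * r) by (apply Ew_cnt; auto).
  assert (Ident := repl_id K p a b Hp_sum Ha Hb Hpb N (L2 S n)).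
  assert (Gain : Ew K p N (fun w => Na w * G w) =
     Ew K p N (fun w => sumR (map (fun k => L2 S n (replace_occ a b k w)) (seq 0 (cnt a w))))
     - Ew K p N (fun w => Na w * L2 S n w)).
  { rewrite <- Ew_minus. apply Ew_ext_len; intros w _ Hl. unfold Na, G. rewrite gain_rel; auto.
    rewrite sumR_minus, sumR_const, length_seq. reflexivity. }
  assert (Pt : forall w, validw K w -> length w = N ->
     Dl * Na w + (- (Dl + d) * INR N) * 1 + ((Dl + d) * INR N) * I w <= Na w * G w).
  { intros w Hw Hl.
    assert (HNa0 : 0 <= Na w) by apply pos_INR.
    assert (HNaN : Na w <= INR N) by (unfold Na; rewrite <- Hl; apply le_INR, cnt_le).
    unfold I. destruct (Rle_dec Dl (G w)).
    - assert (Dl * Na w <= G w * Na w) by (apply Rmult_le_compat_r; auto). lra.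
    - assert (- d * Na w <= Na w * G w).
      { unfold Na, G. rewrite gain_rel; auto.
        apply Rle_trans with (sumR (map (fun _ => -d) (seq 0 (cnt a w)))).
        { rewrite sumR_const, length_seq. lra. }
        apply sumR_mono. intros k Hk. apply in_seq in Hk.
        destruct (replace_split a b w k ltac:(lia)) as [w1 [w2 [E1 E2]]].
        rewrite E2, E1. rewrite E1 in Hw. unfold validw in Hw. apply Forall_app in Hw.
        destruct Hw as [Hw1 Hw2]. inversion Hw2; subst.
        pose proof (L2_bd K S n HK w1 w2 b a Hw1 H2 Hb Ha) as X. apply Rabs_le_iff in X. fold d in X. lra. }
      assert (d * Na w <= d * INR N) by (apply Rmult_le_compat_l; auto).
      assert (Dl * Na w <= Dl * INR N) by (apply Rmult_le_compat_l; lra). lra. }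
  assert (EG : Dl * (INR N * q) - (Dl + d) * INR N * (1 - Ew K p N I) <= Ew K p N (fun w => Na w * G w)).
  { eapply Rle_trans; [|apply (Ew_mono_len K p N _ _ Hp_nonneg Pt)].
    rewrite !Ew_plus, !Ew_scal, Ew_one, ENa; auto. lra. }
  assert (EG2 : INR N * q * Dl / 2 <= Ew K p N (fun w => Na w * G w)).
  { assert ((Dl + d) * INR N * (1 - Ew K p N I) <= (Dl + d) * INR N * eta).
    { apply Rmult_le_compat_l; auto. apply Rmult_le_pos; [lra|apply pos_INR]. }
    assert ((Dl + d) * INR N * eta = INR N * q * Dl / 2) by (unfold eta; field; lra). nra. }
  set (D := fun w => Na w - s * Nb w).
  assert (ED : Ew K p N D = 0).
  { unfold D. rewrite Ew_minus, Ew_scal. fold Na Nb. rewrite ENa, ENb. unfold s. field. lra. }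
  set (m := Ew K p N (L2 S n)).
  assert (DL : Ew K p N (fun w => D w * (L2 S n w - m)) = - Ew K p N (fun w => Na w * G w)).
  { rewrite (Ew_ext _ _ _ _ (fun w => Na w * L2 S n w - s * (Nb w * L2 S n w) - m * D w)).
    2:{ intros; unfold D; ring. }
    rewrite !Ew_minus, Ew_scal, Ew_scal, ED, Gain. unfold s. fold Nb in Ident.
    rewrite Ident. unfold Nb, q, r. ring. }
  assert (ED2 : Ew K p N (fun w => D w ^ 2) <= INR N * e^2).
  { pose proof (var_bd K p Hp_nonneg Hp_sum HK N D e (D_bd K a b s Hs)) as V.
    rewrite ED in V. rewrite (Ew_ext _ _ _ _ (fun w => (D w - 0)^2)); auto. intros; ring. }
  set (t := q * Dl / (2 * e^2)).
  assert (Ht : 0 < t) by (unfold t; apply Rdiv_lt_0_compat; [apply Rmult_lt_0_compat|apply Rmult_lt_0_compat; [|apply pow_lt]]; lra).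
  assert (Q0 : 0 <= Ew K p N (fun w => (L2 S n w - m + t * D w)^2)).
  { rewrite <- (Ew_const K p N 0 Hp_sum). apply Ew_mono; auto. intros; apply pow2_ge_0. }
  rewrite (Ew_ext _ _ _ _ (fun w => (L2 S n w - m)^2 + (2 * t) * (D w * (L2 S n w - m)) + t^2 * (D w ^ 2))) in Q0.
  2:{ intros; ring. }
  rewrite !Ew_plus, !Ew_scal, DL in Q0. fold m.
  set (V := Ew K p N (fun w => (L2 S n w - m) ^ 2)) in *.
  set (X := Ew K p N (fun w => Na w * G w)) in *.
  set (Y := Ew K p N (fun w => D w ^ 2)) in *.
  assert (t^2 * Y <= t^2 * (INR N * e^2)) by (apply Rmult_le_compat_l; [apply pow2_ge_0|auto]).
  assert (2 * t * (INR N * q * Dl / 2) <= 2 * t * X) by (apply Rmult_le_compat_l; lra).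
  assert (c * INR n = 2 * t * (INR N * q * Dl / 2) - t^2 * (INR N * e^2)).
  { rewrite HN. unfold c, t. field. lra. }
  lra.
Qed.
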